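(* Let $X$ be a simplicial set. For any pair of morphisms $(Y',\rho')\xrightarrow{f}(Y,\rho)\xleftarrow{g}(Y'',\rho'')$ in $\mathrm{Comod}_{X_+}$, the pullback $(Y',\rho')\times_{(Y,\rho)}(Y'',\rho'')$ exists in $\mathrm{Comod}_{X_+}$ and there is an isomorphism of right $X_+$-comodules $$(Y',\rho')\times_{(Y,\rho)}(Y'',\rho'')\cong\Big(\big((Y',\rho')\star X\big)\times_{(Y,\rho)\star X}\big((Y'',\rho'')\star X\big)\Big)/X,$$ where the inner pullback is taken in $\mathcal R_X$ (equivalently, on underlying simplicial sets). In particular, if $g=F_{X_+}(h)$ for a pointed map $h:W''\to W$, then $$(Y',\rho')\times_{F_{X_+}W}F_{X_+}W''\cong\Big(\big((Y',\rho')\star X\big)\times_W W''\Big)/X,$$ where the pullback inside is computed in unpointed simplicial sets, using the map $(Y',\rho')\star X\to W$ given by the composite of the first projection $Y'\star X\to Y'$ (i.e. $(y,x)\mapsto y$), the underlying map of $f$, and the identification of the underlying simplicial set of $F_{X_+}W$ followed by collapsing.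
   Context: Notation as follows. For a simplicial set $X$, $X_+=X\sqcup\{+\}$, $\Delta_X$ is the diagonal, $\varepsilon:X_+\to S^0$ is induced by $X\to *$. A right $X_+$-comodule is a pointed simplicial set $Y$ with pointed $\rho:Y\to Y\wedge X_+$ satisfying $(\rho\wedge X_+)\rho=(Y\wedge(\Delta_X)_+)\rho$ and $(Y\wedge\varepsilon)\rho=\mathrm{id}$; morphisms commute with coactions; the category is $\mathrm{Comod}_{X_+}$. The cofree comodule functor is $F_{X_+}(W)=(W\wedge X_+,W\wedge(\Delta_X)_+)$, right adjoint to the forgetful functor. $\mathcal R_X$ is the category of retractive spaces $(Z,i,r)$ ($ri=\mathrm{id}_X$) over $X$. The functor $-/X:\mathcal R_X\to\mathrm{Comod}_{X_+}$ sends $(Z,i,r)$ to $Z/i(X)$ with coaction $[z]\mapsto[([z],r(z))]$; $(Y,\rho)\star X$ is the pullback in unpointed simplicial sets of $Y\xrightarrow{\rho}Y\wedge X_+\leftarrow Y\times X$, with $i(x)=(y_0,x)$ and $r(y,x)=x$. Note that $F_{X_+}(W)\star X\cong(W\times X, x\mapsto(w_0,x),\mathrm{proj}_2)$, so a map $(Y',\rho')\star X\to F_{X_+}(W)\star X$ in $\mathcal R_X$ has a first component $Y'\star X\to W$, which is the map used in the second formula. *)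

(* Defs.v *)
From Stdlib Require Import ClassicalEpsilon ProofIrrelevance.
From HB Require Import structures.
From mathcomp Require Import all_boot.

Set Implicit Arguments.
Unset Strict Implicit.
Unset Printing Implicit Defensive.

(* The simplex category: morphisms [m] -> [n] are monotone maps        *)
(* {0..m} -> {0..n}.                                                   *)

Definition monob m n (f : {ffun 'I_m.+1 -> 'I_n.+1}) : bool :=
  [forall i : 'I_m.+1, forall j : 'I_m.+1, (i <= j) ==> (f i <= f j)].

Definition dmap m n := {f : {ffun 'I_m.+1 -> 'I_n.+1} | monob f}.

Lemma did_mono n : monob [ffun i : 'I_n.+1 => i].
Proof.
by apply/forallP => i; apply/forallP => j; apply/implyP; rewrite !ffunE.
Qed.

Definition did n : dmap n n := exist (fun f => monob f) [ffun i : 'I_n.+1 => i] (did_mono n).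

Lemma dcomp_mono m n p (g : dmap n p) (f : dmap m n) :
  monob [ffun i => proj1_sig g (proj1_sig f i)].
Proof.
apply/forallP => i; apply/forallP => j; apply/implyP => hij; rewrite !ffunE.
have /forallP/(_ i)/forallP/(_ j)/implyP hf := proj2_sig f.
have /forallP/(_ (proj1_sig f i))/forallP/(_ (proj1_sig f j))/implyP hg :=
  proj2_sig g.
exact: hg (hf hij).
Qed.

Definition dcomp m n p (g : dmap n p) (f : dmap m n) : dmap m p :=
  exist (fun h => monob h) [ffun i => proj1_sig g (proj1_sig f i)] (dcomp_mono g f).

Unset Implicit Arguments.
Record sSet := SSet {
  sob :> nat -> Type;
  sact : forall m n, dmap m n -> sob n -> sob m;
  sact_id : forall n (x : sob n), sact n n (did n) x = x;
  sact_comp : forall m n p (f : dmap m n) (g : dmap n p) (x : sob p),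
      sact m p (dcomp g f) x = sact m n f (sact n p g x) }.
Arguments sact {s m n}.

Record smap (X Y : sSet) := SMap {
  sfun :> forall n, X n -> Y n;
  sfun_nat : forall m n (f : dmap m n) (x : X n),
      sfun m (sact f x) = sact f (sfun n x) }.
Arguments SMap {X Y}.
Arguments sfun_nat {X Y} s {m n} f x.
Arguments sfun {X Y} s n.

Record psSet := PSSet {
  pss :> sSet;
  pt : forall n, pss n;
  pt_nat : forall m n (f : dmap m n), sact f (pt n) = pt m }.
Arguments PSSet : clear implicits.
Arguments pt {p} n.
Set Implicit Arguments.

Record psmap (X Y : psSet) := PSMap {
  psm :> smap X Y;
  psm_pt : forall n, psm n (pt n) = pt n }.
Arguments PSMap {X Y}.

Lemma sig_eqP (T : Type) (P : T -> Prop) (x y : {t | P t}) :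
  proj1_sig x = proj1_sig y -> x = y.
Proof.
case: x => a ha; case: y => b hb /= e; subst b.
by rewrite (proof_irrelevance _ ha hb).
Qed.

Definition prod_act (X Y : sSet) m n (f : dmap m n) (p : X n * Y n) :
  X m * Y m := (sact f p.1, sact f p.2).

Lemma prod_act_id (X Y : sSet) n (p : X n * Y n) : prod_act (did n) p = p.
Proof. by case: p => a b; rewrite /prod_act /= !sact_id. Qed.

Lemma prod_act_comp (X Y : sSet) m n p (f : dmap m n) (g : dmap n p)
  (x : X p * Y p) : prod_act (dcomp g f) x = prod_act f (prod_act g x).
Proof. by rewrite /prod_act /= !sact_comp. Qed.

Definition prodS (X Y : sSet) : sSet :=
  @SSet (fun n => (X n * Y n)%type) (@prod_act X Y) (@prod_act_id X Y)
        (@prod_act_comp X Y).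

Definition sndS (W X : sSet) : smap (prodS W X) X :=
  @SMap (prodS W X) X (fun n p => p.2) (fun _ _ _ _ => erefl).

Definition pb_ob (A B C : sSet) (f : smap A C) (g : smap B C) n :=
  {p : A n * B n | f n p.1 = g n p.2}.

Lemma pb_act_ok (A B C : sSet) (f : smap A C) (g : smap B C) m n
  (phi : dmap m n) (p : pb_ob f g n) :
  f m (sact phi (proj1_sig p).1) = g m (sact phi (proj1_sig p).2).
Proof. by rewrite !sfun_nat (proj2_sig p). Qed.

Definition pb_act (A B C : sSet) (f : smap A C) (g : smap B C) m n
  (phi : dmap m n) (p : pb_ob f g n) : pb_ob f g m :=
  exist _ (sact phi (proj1_sig p).1, sact phi (proj1_sig p).2)
          (pb_act_ok phi p).

Lemma pb_act_id (A B C : sSet) (f : smap A C) (g : smap B C) n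
  (p : pb_ob f g n) : pb_act (did n) p = p.
Proof. by apply: sig_eqP; case: p => [[a b] h] /=; rewrite !sact_id. Qed.

Lemma pb_act_comp (A B C : sSet) (f : smap A C) (g : smap B C) m n q
  (phi : dmap m n) (psi : dmap n q) (p : pb_ob f g q) :
  pb_act (dcomp psi phi) p = pb_act phi (pb_act psi p).
Proof. by apply: sig_eqP; case: p => [[a b] h] /=; rewrite !sact_comp. Qed.

Definition pbS (A B C : sSet) (f : smap A C) (g : smap B C) : sSet :=
  @SSet (pb_ob f g) (@pb_act A B C f g) (@pb_act_id A B C f g)
        (@pb_act_comp A B C f g).

(* Z/A is represented as  option {z | z \notin A},  None = the class    *)
(* of A (the basepoint); for A empty this is Z_+.                      *)

Definition qob (Z : sSet) (A : forall n, Z n -> Prop) n :=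
  option {z : Z n | ~ A n z}.

Definition qproj (Z : sSet) (A : forall n, Z n -> Prop) n (z : Z n) :
  qob A n :=
  match excluded_middle_informative (A n z) with
  | left _ => None
  | right h => Some (exist _ z h)
  end.

Definition qact (Z : sSet) (A : forall n, Z n -> Prop) m n (f : dmap m n)
  (q : qob A n) : qob A m :=
  match q with None => None | Some z => qproj A (sact f (proj1_sig z)) end.

Lemma qprojA (Z : sSet) (A : forall n, Z n -> Prop) n (z : Z n) :
  A n z -> qproj A z = None.
Proof. by rewrite /qproj; case: excluded_middle_informative. Qed.

Lemma qprojN (Z : sSet) (A : forall n, Z n -> Prop) n (z : Z n)
  (h : ~ A n z) : qproj A z = Some (exist _ z h).
Proof.
rewrite /qproj; case: excluded_middle_informative => [a|h'].
  by case: (h a).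
by rewrite (proof_irrelevance _ h h').
Qed.

Definition sclosed (Z : sSet) (A : forall n, Z n -> Prop) :=
  forall m n (f : dmap m n) (z : Z n), A n z -> A m (sact f z).

Lemma qproj_nat (Z : sSet) (A : forall n, Z n -> Prop) (hA : sclosed A)
  m n (f : dmap m n) (z : Z n) :
  qproj A (sact f z) = qact f (qproj A z).
Proof.
case: (excluded_middle_informative (A n z)) => a.
  by rewrite (qprojA a) qprojA //; apply: hA.
by rewrite (qprojN a).
Qed.

Lemma qact_id (Z : sSet) (A : forall n, Z n -> Prop) n (q : qob A n) :
  qact (did n) q = q.
Proof. by case: q => [[z h]|] //=; rewrite sact_id; apply: qprojN. Qed.

Lemma qact_comp (Z : sSet) (A : forall n, Z n -> Prop) (hA : sclosed A)
  m n p (f : dmap m n) (g : dmap n p) (q : qob A p) :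
  qact (dcomp g f) q = qact f (qact g q).
Proof. by case: q => [[z h]|] //=; rewrite sact_comp qproj_nat. Qed.

Definition quotS (Z : sSet) (A : forall n, Z n -> Prop) (hA : sclosed A)
  : psSet :=
  @PSSet (@SSet (qob A) (@qact Z A) (@qact_id Z A) (@qact_comp Z A hA))
         (fun n => None) (fun _ _ _ => erefl).

Definition qprojS (Z : sSet) (A : forall n, Z n -> Prop) (hA : sclosed A) :
  smap Z (quotS hA) := @SMap Z (quotS hA) (@qproj Z A) (@qproj_nat Z A hA).

Definition qmap (Z Z' : sSet) (A : forall n, Z n -> Prop)
  (A' : forall n, Z' n -> Prop) (phi : smap Z Z') n (q : qob A n) :
  qob A' n :=
  match q with None => None | Some z => qproj A' (phi n (proj1_sig z)) end.

Lemma qmap_nat (Z Z' : sSet) (A : forall n, Z n -> Prop)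
  (A' : forall n, Z' n -> Prop) (hA : sclosed A) (hA' : sclosed A')
  (phi : smap Z Z') (hphi : forall n z, A n z -> A' n (phi n z))
  m n (f : dmap m n) (q : qob A n) :
  qmap A' phi (qact f q) = qact f (qmap A' phi q).
Proof.
case: q => [[z h]|] //=.
rewrite -(qproj_nat hA') -sfun_nat.
case: (excluded_middle_informative (A m (sact f z))) => a.
  by rewrite (qprojA a) /= qprojA //; apply: hphi.
by rewrite (qprojN a).
Qed.

Definition qmapS (Z Z' : sSet) (A : forall n, Z n -> Prop)
  (A' : forall n, Z' n -> Prop) (hA : sclosed A) (hA' : sclosed A')
  (phi : smap Z Z') (hphi : forall n z, A n z -> A' n (phi n z)) :
  psmap (quotS hA) (quotS hA') :=
  @PSMap (quotS hA) (quotS hA')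
    (@SMap (quotS hA) (quotS hA') (@qmap Z Z' A A' phi)
       (@qmap_nat Z Z' A A' hA hA' phi hphi))
    (fun _ => erefl).

(* Y /\ X_+ = (Y x X_+)/(Y v X_+) is identified with (Y x X)/({y0} x X). *)

Definition smashA (Y : psSet) (X : sSet) n (p : prodS Y X n) : Prop :=
  p.1 = pt n.

Lemma smashA_closed (Y : psSet) (X : sSet) : sclosed (@smashA Y X).
Proof. by move=> m n f [y x]; rewrite /smashA /= => ->; apply: pt_nat. Qed.

Definition smash (Y : psSet) (X : sSet) : psSet :=
  quotS (@smashA_closed Y X).

Definition sm_inS (Y : psSet) (X : sSet) : smap (prodS Y X) (smash Y X) :=
  qprojS (@smashA_closed Y X).

(* Y /\ eps : Y /\ X_+ -> Y /\ S^0 = Y,  [y,x] |-> y *)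
Definition sm_counit_fun (W : psSet) (X : sSet) n (s : smash W X n) : W n :=
  match s with None => pt n | Some p => (proj1_sig p).1 end.

Lemma sm_counit_nat (W : psSet) (X : sSet) m n (f : dmap m n)
  (s : smash W X n) :
  sm_counit_fun (sact f s) = sact f (sm_counit_fun s).
Proof.
case: s => [[[w x] h]|] /=; last by rewrite pt_nat.
case: (excluded_middle_informative (smashA (sact f w, sact f x))) => a.
  by rewrite /qact /= (qprojA a) /=; rewrite /smashA /= in a; rewrite a.
by rewrite /qact /= (qprojN a).
Qed.

Definition sm_counit (W : psSet) (X : sSet) : smap (smash W X) W :=
  @SMap (smash W X) W (@sm_counit_fun W X) (@sm_counit_nat W X).

Definition smf (Y Y' : psSet) (X : sSet) (phi : forall n, Y n -> Y' n) n
  (s : smash Y X n) : smash Y' X n :=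
  match s with
  | None => None
  | Some p => qproj (@smashA Y' X) (phi n (proj1_sig p).1, (proj1_sig p).2)
  end.

(* Y /\ (Delta_X)_+ followed by Y /\ (X_+ /\ X_+) = (Y /\ X_+) /\ X_+ :
   [y,x] |-> [[y,x],x] *)
Definition sm_diag (Y : psSet) (X : sSet) n (s : smash Y X n) :
  smash (smash Y X) X n :=
  match s with
  | None => None
  | Some p => qproj (@smashA (smash Y X) X) (Some p, (proj1_sig p).2)
  end.

Record comod (X : sSet) := Comod {
  cY :> psSet;
  coact : smap cY (smash cY X);
  coact_pt : forall n, coact n (pt n) = pt n }.
Arguments coact {X} c.

Definition is_comod (X : sSet) (C : comod X) : Prop :=
  (forall n (y : C n), sm_counit C X n (coact C n y) = y) /\
  (forall n (y : C n),
      smf (coact C) (coact C n y) = sm_diag (coact C n y)).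

Definition is_chom (X : sSet) (C D : comod X) (phi : psmap C D) : Prop :=
  forall n (y : C n), coact D n (phi n y) = smf phi (coact C n y).

Definition is_comod_pullback (X : sSet) (C' C C'' : comod X)
  (f : psmap C' C) (g : psmap C'' C)
  (P : comod X) (p1 : psmap P C') (p2 : psmap P C'') : Prop :=
  [/\ is_comod P, is_chom p1, is_chom p2,
      (forall n (z : P n), f n (p1 n z) = g n (p2 n z)) &
      forall (T : comod X) (t1 : psmap T C') (t2 : psmap T C''),
        is_comod T -> is_chom t1 -> is_chom t2 ->
        (forall n (z : T n), f n (t1 n z) = g n (t2 n z)) ->
        exists u : psmap T P,
          [/\ is_chom u,
              (forall n (z : T n), p1 n (u n z) = t1 n z),
              (forall n (z : T n), p2 n (u n z) = t2 n z) &
              forall u' : psmap T P, is_chom u' ->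
                (forall n (z : T n), p1 n (u' n z) = t1 n z) ->
                (forall n (z : T n), p2 n (u' n z) = t2 n z) ->
                forall n (z : T n), u' n z = u n z]].

Definition comod_iso (X : sSet) (P Q : comod X) : Prop :=
  exists (phi : psmap P Q) (psi : psmap Q P),
    [/\ is_chom phi, is_chom psi,
        (forall n (z : P n), psi n (phi n z) = z) &
        (forall n (z : Q n), phi n (psi n z) = z)].

Definition gco_fun (X Z : sSet) (A : forall n, Z n -> Prop) (hA : sclosed A)
  (r : smap Z X) n (z : Z n) : prodS (quotS hA) X n := (qproj A z, r n z).

Lemma gco_nat (X Z : sSet) (A : forall n, Z n -> Prop) (hA : sclosed A)
  (r : smap Z X) m n (f : dmap m n) (z : Z n) :
  gco_fun hA r (sact f z) = sact f (gco_fun hA r z).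
Proof. by rewrite /gco_fun (qproj_nat hA) sfun_nat. Qed.

Lemma gco_pt (X Z : sSet) (A : forall n, Z n -> Prop) (hA : sclosed A)
  (r : smap Z X) n (z : Z n) :
  A n z -> @smashA (quotS hA) X n (gco_fun hA r z).
Proof. by move=> a; rewrite /smashA /gco_fun /= qprojA. Qed.

Definition gcoact (X Z : sSet) (A : forall n, Z n -> Prop) (hA : sclosed A)
  (r : smap Z X) : smap (quotS hA) (smash (quotS hA) X) :=
  @qmapS Z (prodS (quotS hA) X) A (@smashA (quotS hA) X) hA
        (@smashA_closed (quotS hA) X)
        (@SMap _ _ (gco_fun hA r) (gco_nat hA r)) (@gco_pt X Z A hA r).

Record rspace (X : sSet) := RSpace {
  rZ :> sSet;
  rin : smap X rZ;
  rret : smap rZ X }.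
Arguments rin {X} r.
Arguments rret {X} r.

Definition imgA (X : sSet) (R : rspace X) n (z : R n) : Prop :=
  exists x, rin R n x = z.

Lemma imgA_closed (X : sSet) (R : rspace X) : sclosed (@imgA X R).
Proof. by move=> m n f z [x <-]; exists (sact f x); apply: sfun_nat. Qed.

(* (Z,i,r) |-> Z/i(X) with coaction [z] |-> [([z], r z)] *)
Definition modX (X : sSet) (R : rspace X) : comod X :=
  @Comod X (quotS (@imgA_closed X R)) (@gcoact X R (@imgA X R) (@imgA_closed X R) (rret R)) (fun _ => erefl).

(* F_{X_+}(W) = (W /\ X_+, W /\ (Delta_X)_+) *)
Definition cofree (X : sSet) (W : psSet) : comod X :=
  @Comod X (smash W X) (@gcoact X (prodS W X) (@smashA W X) (@smashA_closed W X) (sndS W X)) (fun _ => erefl).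

Definition prodmapS (W W' X : sSet) (h : smap W W') :
  smap (prodS W X) (prodS W' X) :=
  @SMap (prodS W X) (prodS W' X) (fun n p => (h n p.1, p.2))
     (fun m n f p => f_equal (fun a => (a, _)) (sfun_nat h f p.1)).

Lemma prodmap_pt (W W' : psSet) (X : sSet) (h : psmap W W') n
  (p : prodS W X n) : smashA p -> smashA (prodmapS X h n p).
Proof. by rewrite /smashA /= => ->; apply: psm_pt. Qed.

Definition cofree_map (X : sSet) (W'' W : psSet) (h : psmap W'' W) :
  psmap (cofree X W'') (cofree X W) :=
  @qmapS (prodS W'' X) (prodS W X) (@smashA W'' X) (@smashA W X)
    (@smashA_closed W'' X) (@smashA_closed W X)
    (prodmapS X h) (@prodmap_pt W'' W X h).

Definition starS (X : sSet) (C : comod X) : sSet :=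
  pbS (coact C) (sm_inS C X).

Lemma istar_ok (X : sSet) (C : comod X) n (x : X n) :
  coact C n (pt n) = sm_inS C X n (pt n, x).
Proof. by rewrite coact_pt /=; rewrite qprojA. Qed.

Definition istar_fun (X : sSet) (C : comod X) n (x : X n) : starS C n :=
  exist _ (pt n, (pt n, x)) (istar_ok C x).

Lemma istar_nat (X : sSet) (C : comod X) m n (f : dmap m n) (x : X n) :
  istar_fun C (sact f x) = sact f (istar_fun C x).
Proof. by apply: sig_eqP => /=; rewrite /prod_act /= pt_nat. Qed.

Definition istar (X : sSet) (C : comod X) : smap X (starS C) :=
  @SMap X (starS C) (@istar_fun X C) (@istar_nat X C).

Definition rstar (X : sSet) (C : comod X) : smap (starS C) X :=
  @SMap (starS C) X (fun n p => (proj1_sig p).2.2) (fun _ _ _ _ => erefl).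

Definition pstar (X : sSet) (C : comod X) : smap (starS C) C :=
  @SMap (starS C) C (fun n p => (proj1_sig p).1) (fun _ _ _ _ => erefl).

Definition star (X : sSet) (C : comod X) : rspace X :=
  @RSpace X (starS C) (istar C) (rstar C).

(* f * X : Y' * X -> Y * X, as a map into the ambient Y x (Y x X) *)
Definition starfun_fun (X : sSet) (C' C : comod X) (f : psmap C' C) n
  (p : starS C' n) : prodS C (prodS C X) n :=
  (f n (proj1_sig p).1, (f n (proj1_sig p).2.1, (proj1_sig p).2.2)).

Lemma starfun_nat (X : sSet) (C' C : comod X) (f : psmap C' C)
  m n (phi : dmap m n) (p : starS C' n) :
  starfun_fun f (sact phi p) = sact phi (starfun_fun f p).
Proof. by rewrite /starfun_fun /= /prod_act /= !sfun_nat. Qed.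

Definition starfun (X : sSet) (C' C : comod X) (f : psmap C' C) :
  smap (starS C') (prodS C (prodS C X)) :=
  @SMap (starS C') (prodS C (prodS C X)) (@starfun_fun X C' C f)
        (@starfun_nat X C' C f).

Definition innerS (X : sSet) (C' C C'' : comod X) (f : psmap C' C)
  (g : psmap C'' C) : sSet := pbS (starfun f) (starfun g).

Lemma inner_i_ok (X : sSet) (C' C C'' : comod X) (f : psmap C' C)
  (g : psmap C'' C) n (x : X n) :
  starfun f n (istar C' n x) = starfun g n (istar C'' n x).
Proof. by rewrite /= /starfun_fun /= !psm_pt. Qed.

Definition inner_i_fun (X : sSet) (C' C C'' : comod X) (f : psmap C' C)
  (g : psmap C'' C) n (x : X n) : innerS f g n :=
  exist _ (istar C' n x, istar C'' n x) (inner_i_ok f g x).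

Lemma inner_i_nat (X : sSet) (C' C C'' : comod X) (f : psmap C' C)
  (g : psmap C'' C) m n (phi : dmap m n) (x : X n) :
  inner_i_fun f g (sact phi x) = sact phi (inner_i_fun f g x).
Proof. by apply: sig_eqP => /=; rewrite !istar_nat. Qed.

Definition inner_r_fun (X : sSet) (C' C C'' : comod X) (f : psmap C' C)
  (g : psmap C'' C) n (p : innerS f g n) : X n :=
  rstar C' n (proj1_sig p).1.

Definition innerR (X : sSet) (C' C C'' : comod X) (f : psmap C' C)
  (g : psmap C'' C) : rspace X :=
  @RSpace X (innerS f g)
    (@SMap X (innerS f g) (@inner_i_fun X C' C C'' f g)
       (@inner_i_nat X C' C C'' f g))
    (@SMap (innerS f g) X (@inner_r_fun X C' C C'' f g)
       (fun _ _ _ _ => erefl)).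

Definition wmap_fun (X : sSet) (C' : comod X) (W : psSet)
  (f : psmap C' (cofree X W)) n (p : starS C' n) : W n :=
  sm_counit W X n (f n (pstar C' n p)).

Lemma wmap_nat (X : sSet) (C' : comod X) (W : psSet)
  (f : psmap C' (cofree X W)) m n (phi : dmap m n) (p : starS C' n) :
  wmap_fun f (sact phi p) = sact phi (wmap_fun f p).
Proof. by rewrite /wmap_fun !sfun_nat. Qed.

Definition wmap (X : sSet) (C' : comod X) (W : psSet)
  (f : psmap C' (cofree X W)) : smap (starS C') W :=
  @SMap (starS C') W (@wmap_fun X C' W f) (@wmap_nat X C' W f).

Definition part2S (X : sSet) (C' : comod X) (W W'' : psSet)
  (f : psmap C' (cofree X W)) (h : psmap W'' W) : sSet := pbS (wmap f) h.

Lemma part2_i_ok (X : sSet) (C' : comod X) (W W'' : psSet)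
  (f : psmap C' (cofree X W)) (h : psmap W'' W) n (x : X n) :
  wmap f n (istar C' n x) = h n (pt n).
Proof. by rewrite psm_pt /= /wmap_fun /= psm_pt. Qed.

Definition part2_i_fun (X : sSet) (C' : comod X) (W W'' : psSet)
  (f : psmap C' (cofree X W)) (h : psmap W'' W) n (x : X n) :
  part2S f h n := exist _ (istar C' n x, pt n) (part2_i_ok f h x).

Lemma part2_i_nat (X : sSet) (C' : comod X) (W W'' : psSet)
  (f : psmap C' (cofree X W)) (h : psmap W'' W) m n (phi : dmap m n)
  (x : X n) :
  part2_i_fun f h (sact phi x) = sact phi (part2_i_fun f h x).
Proof. by apply: sig_eqP => /=; rewrite istar_nat pt_nat. Qed.

Definition part2_r_fun (X : sSet) (C' : comod X) (W W'' : psSet)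
  (f : psmap C' (cofree X W)) (h : psmap W'' W) n (p : part2S f h n) :
  X n := rstar C' n (proj1_sig p).1.

Definition part2R (X : sSet) (C' : comod X) (W W'' : psSet)
  (f : psmap C' (cofree X W)) (h : psmap W'' W) : rspace X :=
  @RSpace X (part2S f h)
    (@SMap X (part2S f h) (@part2_i_fun X C' W W'' f h)
       (@part2_i_nat X C' W W'' f h))
    (@SMap (part2S f h) X (@part2_r_fun X C' W W'' f h)
       (fun _ _ _ _ => erefl)).

(* Main.v *)
Require Import Defs.
From Stdlib Require Import ClassicalEpsilon ProofIrrelevance.
From HB Require Import structures.
From mathcomp Require Import all_boot.
Set Implicit Arguments. Unset Strict Implicit. Unset Printing Implicit Defensive.


Lemma qproj_some (Z : sSet) (A : forall n, Z n -> Prop) n (z : Z n) p :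
  qproj A z = Some p -> proj1_sig p = z.
Proof. by rewrite /qproj; case: excluded_middle_informative => // a [<-]. Qed.

Lemma qproj_none (Z : sSet) (A : forall n, Z n -> Prop) n (z : Z n) :
  qproj A z = None -> A n z.
Proof. by rewrite /qproj; case: excluded_middle_informative. Qed.

Lemma qproj_sig (Z : sSet) (A : forall n, Z n -> Prop) n (w : {z : Z n | ~ A n z}) :
  Some w = qproj A (proj1_sig w).
Proof. by case: w => z h /=; rewrite (qprojN h). Qed.

Lemma qproj_eq (Z : sSet) (A : forall n, Z n -> Prop) n (z z' : Z n) :
  qproj A z = qproj A z' -> (A n z /\ A n z') \/ z = z'.
Proof.
case: (excluded_middle_informative (A n z)) => a.
  rewrite (qprojA a) => /esym/qproj_none; by left.
rewrite (qprojN a); case E: (qproj A z') => [p|] // [e].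
by right; rewrite -(qproj_some E) -e.
Qed.

Lemma qmap_qproj (Z Z' : sSet) (A : forall n, Z n -> Prop)
  (A' : forall n, Z' n -> Prop) (phi : smap Z Z')
  (hphi : forall n z, A n z -> A' n (phi n z)) n (z : Z n) :
  qmap A' phi (qproj A z) = qproj A' (phi n z).
Proof.
case: (excluded_middle_informative (A n z)) => a.
  by rewrite (qprojA a) /= (qprojA (hphi _ _ a)).
by rewrite (qprojN a).
Qed.

Definition qdesc_fun (Z : sSet) (A : forall n, Z n -> Prop) (Y : psSet)
  (phi : smap Z Y) n (q : qob A n) : Y n :=
  match q with None => pt n | Some w => phi n (proj1_sig w) end.

Lemma qdesc_qproj (Z : sSet) (A : forall n, Z n -> Prop) (Y : psSet)
  (phi : smap Z Y) (hphi : forall n z, A n z -> phi n z = pt n) n (z : Z n) :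
  qdesc_fun phi (qproj A z) = phi n z.
Proof.
case: (excluded_middle_informative (A n z)) => a.
  by rewrite (qprojA a) /= hphi.
by rewrite (qprojN a).
Qed.

Lemma qdesc_nat (Z : sSet) (A : forall n, Z n -> Prop) (hA : sclosed A)
  (Y : psSet) (phi : smap Z Y) (hphi : forall n z, A n z -> phi n z = pt n)
  m n (f : dmap m n) (q : quotS hA n) :
  qdesc_fun phi (sact f q) = sact f (qdesc_fun phi q).
Proof.
case: q => [[z h]|] /=; last by rewrite pt_nat.
by rewrite qdesc_qproj // sfun_nat.
Qed.

Definition qdesc (Z : sSet) (A : forall n, Z n -> Prop) (hA : sclosed A)
  (Y : psSet) (phi : smap Z Y) (hphi : forall n z, A n z -> phi n z = pt n) :
  psmap (quotS hA) Y :=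
  @PSMap (quotS hA) Y (@SMap (quotS hA) Y (@qdesc_fun Z A Y phi) (@qdesc_nat Z A hA Y phi hphi)) (fun _ => erefl).

Lemma smf_qproj (X : sSet) (Y Y' : psSet) (phi : psmap Y Y') n (y : Y n) (x : X n) :
  smf phi (qproj (@smashA Y X) (y, x)) = qproj (@smashA Y' X) (phi n y, x).
Proof.
case: (excluded_middle_informative (@smashA Y X n (y, x))) => a.
  rewrite (qprojA a) /= qprojA //; rewrite /smashA /= in a *.
  by rewrite a psm_pt.
by rewrite (qprojN a).
Qed.

Lemma sm_counit_qproj (X : sSet) (Y : psSet) n (y : Y n) (x : X n) :
  sm_counit Y X n (qproj (@smashA Y X) (y, x)) = y.
Proof.
case: (excluded_middle_informative (@smashA Y X n (y, x))) => a.
  by rewrite (qprojA a) /=; rewrite /smashA /= in a.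
by rewrite (qprojN a).
Qed.

Lemma coact_modX (X : sSet) (R : rspace X) n (z : R n) :
  coact (modX R) n (qproj (@imgA X R) z) =
  qproj (@smashA (modX R) X) (qproj (@imgA X R) z, rret R n z).
Proof. exact: (qmap_qproj (@gco_pt X R _ (@imgA_closed X R) (rret R))). Qed.

Lemma coact_cofree (X : sSet) (W : psSet) n (w : W n) (x : X n) :
  coact (cofree X W) n (qproj (@smashA W X) (w, x)) =
  qproj (@smashA (cofree X W) X) (qproj (@smashA W X) (w, x), x).
Proof. exact: (qmap_qproj (@gco_pt X _ _ (@smashA_closed W X) (sndS W X))). Qed.


Lemma smf_inj (X : sSet) (P C' C'' : psSet) (p1 : psmap P C') (p2 : psmap P C'') :
  (forall n q q', p1 n q = p1 n q' -> p2 n q = p2 n q' -> q = q') ->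
  forall n (s s' : smash P X n), smf p1 s = smf p1 s' -> smf p2 s = smf p2 s' -> s = s'.
Proof.
move=> inj n.
have ptinj : forall q : P n, p1 n q = pt n -> p2 n q = pt n -> q = pt n.
  by move=> q e1 e2; apply: inj; rewrite psm_pt.
case=> [[[q x] h]|]; case=> [[[q' x'] h']|] //=.
- move=> e1 e2.
  have [[a1 a1']|e1'] := qproj_eq e1; have [[a2 a2']|e2'] := qproj_eq e2.
  + rewrite /smashA /= in a1 a1' a2 a2'.
    by exfalso; apply: h; rewrite /smashA /=; apply: ptinj.
  + rewrite /smashA /= in a1 a1'.
    case: e2' => e2' ex; subst x'; congr Some; apply: sig_eqP => /=.
    by rewrite (inj _ q q') // a1 a1'.
  + rewrite /smashA /= in a2 a2'.
    case: e1' => e1' ex; subst x'; congr Some; apply: sig_eqP => /=.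
    by rewrite (inj _ q q') // a2 a2'.
  + case: e1' => e1' ex; case: e2' => e2' _; subst x'; congr Some; apply: sig_eqP => /=.
    by rewrite (inj _ q q').
- move=> /qproj_none a1 /qproj_none a2; rewrite /smashA /= in a1 a2.
  by exfalso; apply: h; rewrite /smashA /=; apply: ptinj.
- move=> /esym/qproj_none a1 /esym/qproj_none a2; rewrite /smashA /= in a1 a2.
  by exfalso; apply: h'; rewrite /smashA /=; apply: ptinj.
Qed.

Lemma smf_comp (X : sSet) (T P C' : psSet) (u : psmap T P) (p1 : psmap P C')
  (t1 : psmap T C') (e : forall n y, p1 n (u n y) = t1 n y) n (s : smash T X n) :
  smf p1 (smf u s) = smf t1 s.
Proof. by case: s => [[[y x] h]|] //=; rewrite smf_qproj e. Qed.

Lemma comod_counit_some (X : sSet) (C : comod X) (HC : is_comod C) n (y : C n) p :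
  coact C n y = Some p -> (proj1_sig p).1 = y.
Proof. by move=> E; have := HC.1 n y; rewrite E. Qed.

Lemma comod_counit_none (X : sSet) (C : comod X) (HC : is_comod C) n (y : C n) :
  coact C n y = None -> y = pt n.
Proof. by move=> E; have := HC.1 n y; rewrite E. Qed.

Lemma pullback_crit (X : sSet) (C' C C'' P : comod X) (f : psmap C' C) (g : psmap C'' C)
  (p1 : psmap P C') (p2 : psmap P C'') :
  is_comod P -> is_chom p1 -> is_chom p2 ->
  (forall n z, f n (p1 n z) = g n (p2 n z)) ->
  (forall n (q q' : P n), p1 n q = p1 n q' -> p2 n q = p2 n q' -> q = q') ->
  (forall n (y' : C' n) (y'' : C'' n) (x : X n), f n y' = g n y'' ->
     coact C' n y' = qproj (@smashA C' X) (y', x) ->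
     coact C'' n y'' = qproj (@smashA C'' X) (y'', x) ->
     exists q : P n, p1 n q = y' /\ p2 n q = y'') ->
  is_comod_pullback f g p1 p2.
Proof.
move=> HP hp1 hp2 hcomm inj Hex; split=> // T t1 t2 HT ht1 ht2 htcomm.
have ex : forall n (z : T n), exists q, p1 n q = t1 n z /\ p2 n q = t2 n z.
  move=> n z; case E: (coact T n z) => [p|].
    have hz := comod_counit_some HT E.
    apply: (Hex n (t1 n z) (t2 n z) (proj1_sig p).2) => //.
      by rewrite ht1 E /= hz.
    by rewrite ht2 E /= hz.
  have -> := comod_counit_none HT E.
  by exists (pt n); rewrite !psm_pt.
pose u_fun n (z : T n) := epsilon (inhabits (pt n))
   (fun q => p1 n q = t1 n z /\ p2 n q = t2 n z).
have uspec n z : p1 n (u_fun n z) = t1 n z /\ p2 n (u_fun n z) = t2 n z.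
  exact: (epsilon_spec _ _ (ex n z)).
have unat : forall m n (phi : dmap m n) (z : T n),
    u_fun m (sact phi z) = sact phi (u_fun n z).
  move=> m n phi z; apply: inj.
    by rewrite (uspec m _).1 sfun_nat (sfun_nat p1) (uspec n z).1.
  by rewrite (uspec m _).2 sfun_nat (sfun_nat p2) (uspec n z).2.
have upt : forall n, u_fun n (pt n) = pt n.
  by move=> n; apply: inj; [rewrite (uspec n (pt n)).1 | rewrite (uspec n (pt n)).2]; rewrite !psm_pt.
pose u := @PSMap T P (@SMap T P u_fun unat) upt.
have chomu : is_chom u.
  move=> n z; apply: (smf_inj (X:=X) inj).
    rewrite -hp1 (uspec n z).1 ht1 (smf_comp (t1 := t1)) //.
    by move=> k y; exact: (uspec k y).1.
  rewrite -hp2 (uspec n z).2 ht2 (smf_comp (t1 := t2)) //.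
  by move=> k y; exact: (uspec k y).2.
exists u; split => //.
- by move=> n z; exact: (uspec n z).1.
- by move=> n z; exact: (uspec n z).2.
- move=> u' _ e1 e2 n z; apply: inj.
    by rewrite e1 (uspec n z).1.
  by rewrite e2 (uspec n z).2.
Qed.

Lemma modX_comod (X : sSet) (R : rspace X) : is_comod (modX R).
Proof.
have key : forall n (q : modX R n) p, coact (modX R) n q = Some p -> (proj1_sig p).1 = q.
  move=> n [w|] p //; rewrite (qproj_sig w) coact_modX => /qproj_some e.
  by rewrite e.
split.
- move=> n q; case E: (coact (modX R) n q) => [p|] /=.
    exact: key E.
  move: E; case: q => [w|] //; rewrite (qproj_sig w) coact_modX => /qproj_none.
  by rewrite /smashA /= -qproj_sig.
- move=> n q; case E: (coact (modX R) n q) => [p|] //.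
  have k := key _ _ _ E.
  have -> : smf (coact (modX R)) (Some p) =
    qproj (@smashA (smash (modX R) X) X) (coact (modX R) n (sval p).1, (sval p).2) by [].
  by rewrite k E.
Qed.

Lemma smf_id (X : sSet) (Y : psSet) n (s : smash Y X n) :
  smf (fun n (y : Y n) => y) s = s.
Proof. by case: s => [[[y x] h]|] //=; rewrite (qprojN h). Qed.

Lemma comod_iso_refl (X : sSet) (P : comod X) : comod_iso P P.
Proof.
pose i := @PSMap P P (@SMap P P (fun n y => y) (fun _ _ _ _ => erefl)) (fun _ => erefl).
have hi : is_chom i by move=> n y; rewrite /= smf_id.
by exists i, i.
Qed.

Lemma star_snd (X : sSet) (C : comod X) (HC : is_comod C) n (a : starS C n) :
  (proj1_sig a).2.1 = (proj1_sig a).1.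
Proof.
case: a => [[y [y' x]] h] /=; rewrite /= in h.
case E: (coact C n y) h => [p|] h.
  have e := qproj_some (esym h).
  by rewrite -(comod_counit_some HC E) e.
rewrite (comod_counit_none HC E); exact: (qproj_none (esym h)).
Qed.

Lemma star_coact (X : sSet) (C : comod X) (HC : is_comod C) n (a : starS C n) :
  coact C n (proj1_sig a).1 = qproj (@smashA C X) ((proj1_sig a).1, (proj1_sig a).2.2).
Proof.
have := proj2_sig a; rewrite /= => ->.
by rewrite -(star_snd HC a); case: (proj1_sig a) => ? [].
Qed.

Lemma coact_x_uniq (X : sSet) (C : comod X) n (y : C n) (x x' : X n) :
  y <> pt n -> coact C n y = qproj (@smashA C X) (y, x) ->
  coact C n y = qproj (@smashA C X) (y, x') -> x = x'.
Proof.
by move=> ny -> /qproj_eq [[a _]|[]] //.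
Qed.

Lemma chom_qdesc (X : sSet) (R : rspace X) (C : comod X) (phi : smap R C)
  (hphi : forall n z, @imgA X R n z -> phi n z = pt n)
  (hc : forall n z, coact C n (phi n z) = qproj (@smashA C X) (phi n z, rret R n z)) :
  is_chom (qdesc (@imgA_closed X R) hphi : psmap (modX R) C).
Proof.
move=> n [w|]; last by rewrite /= coact_pt.
rewrite (qproj_sig w) coact_modX smf_qproj.
by rewrite /= qdesc_qproj // hc.
Qed.

Lemma cofree_fix (X : sSet) (W : psSet) n (s : cofree X W n) (x : X n) :
  coact (cofree X W) n s = qproj (@smashA (cofree X W) X) (s, x) ->
  s = qproj (@smashA W X) (sm_counit W X n s, x).
Proof.
case: s => [[[w x0] hs]|] /=; last by move=> _; rewrite qprojA.
rewrite (@qproj_sig (prodS W X) (@smashA W X) n (exist _ (w, x0) hs)) /=.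
rewrite /gco_fun /=.
move/qproj_eq => [[a _]|[e]].
  by move: a; rewrite /smashA /= (qprojN hs).
by rewrite e.
Qed.


Definition in1 (X : sSet) (C' C C'' : comod X) (f : psmap C' C) (g : psmap C'' C) :
  smap (innerS f g) C' :=
  @SMap (innerS f g) C' (fun n w => (proj1_sig (proj1_sig w).1).1) (fun _ _ _ _ => erefl).

Definition in2 (X : sSet) (C' C C'' : comod X) (f : psmap C' C) (g : psmap C'' C) :
  smap (innerS f g) C'' :=
  @SMap (innerS f g) C'' (fun n w => (proj1_sig (proj1_sig w).2).1) (fun _ _ _ _ => erefl).

Lemma in1_pt (X : sSet) (C' C C'' : comod X) (f : psmap C' C) (g : psmap C'' C) n z :
  @imgA X (innerR f g) n z -> in1 f g n z = pt n.
Proof. by move=> [x <-]. Qed.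

Lemma in2_pt (X : sSet) (C' C C'' : comod X) (f : psmap C' C) (g : psmap C'' C) n z :
  @imgA X (innerR f g) n z -> in2 f g n z = pt n.
Proof. by move=> [x <-]. Qed.

Definition P1 (X : sSet) (C' C C'' : comod X) (f : psmap C' C) (g : psmap C'' C) :
  psmap (modX (innerR f g)) C' := qdesc (@imgA_closed X (innerR f g)) (@in1_pt X C' C C'' f g).

Definition P2 (X : sSet) (C' C C'' : comod X) (f : psmap C' C) (g : psmap C'' C) :
  psmap (modX (innerR f g)) C'' := qdesc (@imgA_closed X (innerR f g)) (@in2_pt X C' C C'' f g).

Lemma inner_x (X : sSet) (C' C C'' : comod X) (f : psmap C' C) (g : psmap C'' C) n
  (w : innerS f g n) :
  (proj1_sig (proj1_sig w).2).2.2 = (proj1_sig (proj1_sig w).1).2.2.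
Proof. by have := proj2_sig w => /(f_equal (fun t => t.2.2)) /= ->. Qed.

Lemma inner_ext (X : sSet) (C' C C'' : comod X) (f : psmap C' C) (g : psmap C'' C)
  (H' : is_comod C') (H'' : is_comod C'') n (w w' : innerS f g n) :
  (proj1_sig (proj1_sig w).1).1 = (proj1_sig (proj1_sig w').1).1 ->
  (proj1_sig (proj1_sig w).2).1 = (proj1_sig (proj1_sig w').2).1 ->
  (proj1_sig (proj1_sig w).1).2.2 = (proj1_sig (proj1_sig w').1).2.2 -> w = w'.
Proof.
move=> e1 e2 e3.
have e4 := inner_x w; have e5 := inner_x w'.
have s1 := star_snd H' (proj1_sig w).1; have s1' := star_snd H' (proj1_sig w').1.
have s2 := star_snd H'' (proj1_sig w).2; have s2' := star_snd H'' (proj1_sig w').2.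
move: e1 e2 e3 e4 e5 s1 s1' s2 s2'.
case: w => [[[[y1 [y1' x1]] h1] [[z1 [z1' u1]] k1]] hw].
case: w' => [[[[y2 [y2' x2]] h2] [[z2 [z2' u2]] k2]] hw'] /=.
move=> e1 e2 e3 e4 e5 s1 s1' s2 s2'; subst.
apply: sig_eqP => /=; congr pair; apply: sig_eqP => //=.
Qed.

Lemma part1 (X : sSet) (C' C C'' : comod X) (f : psmap C' C) (g : psmap C'' C) :
  is_comod C' -> is_comod C'' -> is_chom f -> is_chom g ->
  is_comod_pullback f g (P1 f g) (P2 f g).
Proof.
move=> H' H'' hf hg.
apply: pullback_crit.
- exact: modX_comod.
- apply: chom_qdesc => n z /=.
  exact: (star_coact H' (proj1_sig z).1).
- apply: chom_qdesc => n z /=.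
  by rewrite (star_coact H'' (proj1_sig z).2) inner_x.
- move=> n [w|]; last by rewrite /= !psm_pt.
  by rewrite /=; have := proj2_sig (proj1_sig w) => /(f_equal fst).
- have img : forall n (w : innerS f g n),
      (proj1_sig (proj1_sig w).1).1 = pt n -> (proj1_sig (proj1_sig w).2).1 = pt n ->
      @imgA X (innerR f g) n w.
    move=> n w ha hb; exists (proj1_sig (proj1_sig w).1).2.2.
    by apply: inner_ext.
  move=> n [w|] [w'|] /=.
  + move=> e1 e2; congr Some; apply: sig_eqP; apply: inner_ext => //.
    case: (excluded_middle_informative ((proj1_sig (proj1_sig (proj1_sig w)).1).1 = pt n)) => ha.
      case: (excluded_middle_informative ((proj1_sig (proj1_sig (proj1_sig w)).2).1 = pt n)) => hb.
        by case: (proj2_sig w); apply: img.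
      rewrite -inner_x -(inner_x (proj1_sig w')).
      apply: (coact_x_uniq hb).
        exact: (star_coact H'' (proj1_sig (proj1_sig w)).2).
      rewrite e2; exact: (star_coact H'' (proj1_sig (proj1_sig w')).2).
    apply: (coact_x_uniq ha).
      exact: (star_coact H' (proj1_sig (proj1_sig w)).1).
    rewrite e1; exact: (star_coact H' (proj1_sig (proj1_sig w')).1).
  + move=> e1 e2; case: (proj2_sig w); apply: img; by rewrite -?e1 -?e2.
  + move=> e1 e2; case: (proj2_sig w'); apply: img; by rewrite -?e1 -?e2.
  + by [].
- move=> n y' y'' x e h1 h2.
  pose a : starS C' n := exist _ (y', (y', x)) h1.
  pose b : starS C'' n := exist _ (y'', (y'', x)) h2.
  have hw : starfun f n a = starfun g n b by rewrite /= /starfun_fun /= e.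
  pose w : innerS f g n := exist _ (a, b) hw.
  exists (qproj (@imgA X (innerR f g)) w); split.
    by rewrite /P1 /= qdesc_qproj //; exact: in1_pt.
  by rewrite /P2 /= qdesc_qproj //; exact: in2_pt.
Qed.


Definition pt1 (X : sSet) (C' : comod X) (W W'' : psSet) (f : psmap C' (cofree X W))
  (h : psmap W'' W) : smap (part2S f h) C' :=
  @SMap (part2S f h) C' (fun n w => (proj1_sig (proj1_sig w).1).1) (fun _ _ _ _ => erefl).

Definition pt2_fun (X : sSet) (C' : comod X) (W W'' : psSet) (f : psmap C' (cofree X W))
  (h : psmap W'' W) n (w : part2S f h n) : cofree X W'' n :=
  qproj (@smashA W'' X) ((proj1_sig w).2, (proj1_sig (proj1_sig w).1).2.2).

Lemma pt2_nat (X : sSet) (C' : comod X) (W W'' : psSet) (f : psmap C' (cofree X W))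
  (h : psmap W'' W) m n (phi : dmap m n) (w : part2S f h n) :
  pt2_fun (sact phi w) = sact phi (pt2_fun w).
Proof. exact: (qproj_nat (@smashA_closed W'' X) phi (_, _)). Qed.

Definition pt2 (X : sSet) (C' : comod X) (W W'' : psSet) (f : psmap C' (cofree X W))
  (h : psmap W'' W) : smap (part2S f h) (cofree X W'') :=
  @SMap (part2S f h) (cofree X W'') (@pt2_fun X C' W W'' f h) (@pt2_nat X C' W W'' f h).

Lemma pt1_pt (X : sSet) (C' : comod X) (W W'' : psSet) (f : psmap C' (cofree X W))
  (h : psmap W'' W) n z :
  @imgA X (part2R f h) n z -> pt1 f h n z = pt n.
Proof. by move=> [x <-]. Qed.

Lemma pt2_pt (X : sSet) (C' : comod X) (W W'' : psSet) (f : psmap C' (cofree X W))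
  (h : psmap W'' W) n z :
  @imgA X (part2R f h) n z -> pt2 f h n z = pt n.
Proof. by move=> [x <-]; rewrite /= /pt2_fun /= qprojA. Qed.

Definition Q1 (X : sSet) (C' : comod X) (W W'' : psSet) (f : psmap C' (cofree X W))
  (h : psmap W'' W) : psmap (modX (part2R f h)) C' :=
  qdesc (@imgA_closed X (part2R f h)) (@pt1_pt X C' W W'' f h).

Definition Q2 (X : sSet) (C' : comod X) (W W'' : psSet) (f : psmap C' (cofree X W))
  (h : psmap W'' W) : psmap (modX (part2R f h)) (cofree X W'') :=
  qdesc (@imgA_closed X (part2R f h)) (@pt2_pt X C' W W'' f h).

Lemma part2_ext (X : sSet) (C' : comod X) (W W'' : psSet) (f : psmap C' (cofree X W))
  (h : psmap W'' W) (H' : is_comod C') n (w w' : part2S f h n) :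
  (proj1_sig (proj1_sig w).1).1 = (proj1_sig (proj1_sig w').1).1 ->
  (proj1_sig w).2 = (proj1_sig w').2 ->
  (proj1_sig (proj1_sig w).1).2.2 = (proj1_sig (proj1_sig w').1).2.2 -> w = w'.
Proof.
have s1 := star_snd H' (proj1_sig w).1; have s1' := star_snd H' (proj1_sig w').1.
move: s1 s1'.
case: w => [[[[y1 [y1' x1]] h1] w2] hw].
case: w' => [[[[y2 [y2' x2]] h2] w2'] hw'] /=.
move=> s1 s1' e1 e2 e3; subst.
by apply: sig_eqP => /=; congr pair; apply: sig_eqP.
Qed.

Lemma cofree_map_qproj (X : sSet) (W W'' : psSet) (h : psmap W'' W) n (w : W'' n) (x : X n) :
  cofree_map X h n (qproj (@smashA W'' X) (w, x)) = qproj (@smashA W X) (h n w, x).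
Proof. exact: (qmap_qproj (@prodmap_pt W'' W X h)). Qed.

Lemma part2 (X : sSet) (C' : comod X) (W W'' : psSet) (f : psmap C' (cofree X W))
  (h : psmap W'' W) :
  is_comod C' -> is_chom f ->
  is_comod_pullback f (cofree_map X h) (Q1 f h) (Q2 f h).
Proof.
move=> H' hf.
have fa : forall n (a : starS C' n),
    f n (proj1_sig a).1 = qproj (@smashA W X) (sm_counit W X n (f n (proj1_sig a).1), (proj1_sig a).2.2).
  move=> n a; apply: cofree_fix.
  by rewrite hf (star_coact H' a) smf_qproj.
apply: pullback_crit.
- exact: modX_comod.
- apply: chom_qdesc => n z /=.
  exact: (star_coact H' (proj1_sig z).1).
- apply: chom_qdesc => n z.
  by rewrite [pt2 f h n z]/= /pt2_fun coact_cofree.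
- move=> n [w|]; last by rewrite /= !psm_pt.
  rewrite [Q1 f h n _]/= [Q2 f h n _]/= /pt2_fun cofree_map_qproj fa.
  have := proj2_sig (proj1_sig w); rewrite /= /wmap_fun /= => ->.
  by [].
- have img : forall n (w : part2S f h n),
      (proj1_sig (proj1_sig w).1).1 = pt n -> (proj1_sig w).2 = pt n ->
      @imgA X (part2R f h) n w.
    move=> n w ha hb; exists (proj1_sig (proj1_sig w).1).2.2.
    by apply: part2_ext.
  move=> n [w|] [w'|] /=.
  + move=> e1 e2; congr Some; apply: sig_eqP; rewrite /pt2_fun in e2.
    have [[a2 a2']|e] := qproj_eq e2.
      rewrite /smashA /= in a2 a2'.
      apply: part2_ext => //; first by rewrite a2 a2'.
      case: (excluded_middle_informative ((proj1_sig (proj1_sig (proj1_sig w)).1).1 = pt n)) => ha.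
        by case: (proj2_sig w); apply: img.
      apply: (coact_x_uniq ha).
        exact: (star_coact H' (proj1_sig (proj1_sig w)).1).
      rewrite e1; exact: (star_coact H' (proj1_sig (proj1_sig w')).1).
    by case: e => ea eb; apply: part2_ext.
  + rewrite /pt2_fun => e1 /qproj_none e2; case: (proj2_sig w); apply: img => //.
  + rewrite /pt2_fun => e1 /esym/qproj_none e2; case: (proj2_sig w'); apply: img => //.
  + by [].
- move=> n y' y'' x e h1 h2.
  move: (sm_counit W'' X n y'') (cofree_fix h2) => w2 ey.
  rewrite ey in e.
  pose a : starS C' n := exist _ (y', (y', x)) h1.
  have hw : wmap f n a = h n w2.
    rewrite /= /wmap_fun /= e cofree_map_qproj; exact: (sm_counit_qproj (h n w2) x).
  pose w : part2S f h n := exist _ (a, w2) hw.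
  exists (qproj (@imgA X (part2R f h)) w); split.
    by rewrite /Q1 /= qdesc_qproj //; exact: pt1_pt.
  rewrite /Q2 /= qdesc_qproj; last exact: pt2_pt.
  by rewrite ey.
Qed.

Theorem corollary3p3 (X : sSet) :
  (forall (C' C C'' : comod X) (f : psmap C' C) (g : psmap C'' C),
      is_comod C' -> is_comod C -> is_comod C'' ->
      is_chom f -> is_chom g ->
      exists (P : comod X) (p1 : psmap P C') (p2 : psmap P C''),
        [/\ is_comod_pullback f g p1 p2,
            is_comod (modX (innerR f g)) &
            comod_iso P (modX (innerR f g))])
  /\
  (forall (C' : comod X) (W W'' : psSet) (f : psmap C' (cofree X W))
          (h : psmap W'' W),
      is_comod C' -> is_chom f ->
      exists (P : comod X) (p1 : psmap P C') (p2 : psmap P (cofree X W'')),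
        [/\ is_comod_pullback f (cofree_map X h) p1 p2,
            is_comod (modX (part2R f h)) &
            comod_iso P (modX (part2R f h))]).
Proof.
Proof.
split.
- move=> C' C C'' f g H' HC H'' hf hg.
  exists (modX (innerR f g)), (P1 f g), (P2 f g); split.
  + exact: part1.
  + exact: modX_comod.
  + exact: comod_iso_refl.
- move=> C' W W'' f h H' hf.
  exists (modX (part2R f h)), (Q1 f h), (Q2 f h); split.
  + exact: part2.
  + exact: modX_comod.
  + exact: comod_iso_refl.
Qed.
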